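(* For every $n\ge 1$ and every $\pi\in S_n$, the permutation $\pi$ is $(n-1)$-stack-sortable under $s_{1\dot{2}}$, i.e. $s_{1\dot{2}}^{\,n-1}(\pi)=12\cdots n$.
   Context: The $1\dot{2}$-avoiding stack-sorting map $s_{1\dot{2}}$ is defined as follows. Start with the input $\pi$ and an empty stack. Repeat the following step until both the input and the stack are empty: - If input remains, and either the stack is empty or the next input entry is smaller than the entry at the bottom of the stack, push the next input entry onto the top of the stack. - Otherwise, pop the top entry of the stack and append it to the output. The output word is $s_{1\dot{2}}(\pi)$. For an integer $t\ge 0$, a permutation $\pi\in S_n$ is called $t$-stack-sortable (under $s_{1\dot{2}}$) if $s_{1\dot{2}}^{\,t}(\pi)$, the $t$-fold iterate applied to $\pi$, equals the identity $12\cdots n$. *)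

(* Defs.v *)
From mathcomp Require Import all_boot.
Set Implicit Arguments. Unset Strict Implicit. Unset Printing Implicit Defensive.

(* The 1(dot 2)-avoiding stack-sorting map, simulated step by step.
   Stack is a list with its TOP at the head; the BOTTOM is [last]. *)

(* one step of the machine on (input, stack, reversed output) *)
Definition s12_step (c : seq nat * seq nat * seq nat) : seq nat * seq nat * seq nat :=
  let: (inp, st, out) := c in
  match inp, st with
  | x :: inp', [::] => (inp', [:: x], out)
  | x :: inp', y :: st' =>
      if x < last y st' then (inp', x :: st, out)
      else (inp, st', y :: out)
  | [::], y :: st' => (inp, st', y :: out)
  | [::], [::] => c
  end.

(* Each step either consumes an input entry or pops one, so 2 * size steps
   empty both input and stack exactly. *)
Definition s12 (p : seq nat) : seq nat :=
  let: (_, _, out) := iter (2 * size p) s12_step (p, [::], [::]) in rev out.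

Definition is_perm (n : nat) (p : seq nat) : bool := perm_eq p (iota 1 n).

Definition t_stack_sortable (t : nat) (p : seq nat) : Prop :=
  iter t s12 p = iota 1 (size p).

Example ex1 : s12 [:: 2; 3; 1] = [:: 2; 1; 3]. Proof. reflexivity. Qed.
Example ex2 : s12 [:: 3; 1; 2] = [:: 2; 1; 3]. Proof. reflexivity. Qed.
Example ex3 : iter 3 s12 [:: 4; 3; 2; 1] = [:: 1; 2; 3; 4]. Proof. reflexivity. Qed.
Example ex4 : all (fun p => iter 3 s12 p == iota 1 4) (permutations (iota 1 4)). Proof. reflexivity. Qed.

(* Main.v *)
Require Import Defs.
From mathcomp Require Import all_boot.
From mathcomp Require Import zify.
Set Implicit Arguments. Unset Strict Implicit. Unset Printing Implicit Defensive.

Fixpoint go (b : nat) (acc p : seq nat) : seq nat :=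
  match p with
  | [::] => acc
  | x :: p' => if x < b then go b (x :: acc) p' else acc ++ go x [:: x] p'
  end.

Definition f p := if p is x :: p' then go x [:: x] p' else [::].

Lemma fix_lem k out : iter k s12_step ([::],[::],out) = ([::],[::],out).
Proof. by elim: k => //= k ->. Qed.

Lemma pop st : forall y out inp, (if inp is x :: _ then last y st <= x else true) ->
  iter (size st).+1 s12_step (inp, y::st, out) = (inp, [::], rev (y::st) ++ out).
Proof.
elim: st => [|z st IH] y out inp H.
  case: inp H => [|x inp] H /=; last by rewrite ltnNge H.
  by [].
rewrite iterSr.
have -> : s12_step (inp, y :: z :: st, out) = (inp, z :: st, y :: out).
  case: inp H => [|x inp] H //=. by rewrite ltnNge H.
rewrite IH; last by case: inp H => [|? ?] /=.
by rewrite [rev (y :: _)]rev_cons cat_rcons.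
Qed.

Lemma mach inp : forall y st out k, 2 * size inp + size (y::st) <= k ->
  iter k s12_step (inp, y::st, out) = ([::],[::], rev (go (last y st) (y::st) inp) ++ out).
Proof.
elim: inp => [|x inp IH] y st out k Hk.
  have -> : k = (k - (size st).+1) + (size st).+1 by simpl in Hk; lia.
  by rewrite iterD pop // fix_lem.
simpl in Hk.
case H: (x < last y st).
  have -> : k = (k.-1).+1 by lia.
  rewrite iterSr /= H IH /=; last by lia.
  by [].
have -> : k = (k - (size st).+1).-1.+1 + (size st).+1 by lia.
rewrite iterD pop; last by rewrite /= leqNgt H.
rewrite iterSr /= IH /=; last by lia.
by rewrite H -cat_cons rev_cat catA.
Qed.

Lemma s12E p : s12 p = f p.
Proof.
case: p => [|x p] //.
rewrite /s12.
have -> : 2 * size (x :: p) = (2 * size p).+1.+1 by rewrite /=; lia.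
rewrite iterSr [s12_step _]/= mach; last by rewrite /=; lia.
by rewrite cats0 revK.
Qed.

Lemma goE b q acc : all (fun u => u < b) q -> go b acc q = catrev q acc.
Proof.
elim: q acc => [|y q IH] acc //= /andP [H1 H2].
by rewrite H1 IH.
Qed.

Lemma go_perm p : forall b acc, perm_eq (go b acc p) (acc ++ p).
Proof.
elim: p => [|y p IH] b acc /=; first by rewrite cats0.
case: (y < b).
  apply: perm_trans (IH _ _) _.
  by rewrite -cat1s (perm_catCA [:: y] acc p).
by rewrite perm_cat2l (IH _ _).
Qed.

Lemma f_perm p : perm_eq (f p) p.
Proof. case: p => [|x p] //=. exact: go_perm. Qed.

Lemma go_cat q : forall b acc x s, all (fun u => u < x) (b::q) ->
  go b acc (q ++ x :: s) = go b acc q ++ go x [:: x] s.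
Proof.
elim: q => [|y q IH] b acc x s /= /andP [Hb Hq].
  by rewrite ltnNge ltnW.
move: Hq => /andP [Hy Hq].
case: (y < b).
  by rewrite IH //= Hb.
by rewrite IH /= ?Hy // catA.
Qed.

Lemma f_cat2 q x s : all (fun u => u < x) q -> f (q ++ x :: s) = f q ++ go x [:: x] s.
Proof.
case: q => [|y q] H //=.
by rewrite go_cat.
Qed.

Lemma go_iota k : forall a b acc, b < a -> go b acc (iota a k) = acc ++ iota a k.
Proof.
elim: k => [|k IH] a b acc H /=; first by rewrite cats0.
by rewrite ltnNge (ltnW H) /= IH.
Qed.

Lemma f_iota a k : f (iota a k) = iota a k.
Proof. case: k => [|k] //=. by rewrite go_iota. Qed.

Lemma go_cat_iota b acc q a k : all (fun u => u < b) q -> b < a ->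
  go b acc (q ++ iota a k) = catrev q acc ++ iota a k.
Proof.
move=> Hq Hb; case: k => [|k]; first by rewrite /= !cats0 goE.
rewrite /= go_cat; last first.
  rewrite /= Hb /=; apply/allP => u Hu.
  by have := allP Hq u Hu; lia.
by rewrite goE // go_iota.
Qed.

Lemma step_inv n m p q : m < n -> p = q ++ iota m.+2 (n - m.+1) ->
  perm_eq q (iota 1 m.+1) ->
  exists2 q', f p = q' ++ iota m.+1 (n - m) & perm_eq q' (iota 1 m).
Proof.
move=> Hmn -> Hq.
have Hin : m.+1 \in q by rewrite (perm_mem Hq) mem_iota; lia.
case/splitPr: Hin Hq => q1 q2 Hq.
have Hq12 : perm_eq (q1 ++ q2) (iota 1 m).
  rewrite -(perm_cat2r [:: m.+1]).
  have E : iota 1 m.+1 = iota 1 m ++ [:: m.+1] by rewrite -[X in iota 1 X]addn1 iotaD add1n.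
  rewrite E in Hq.
  apply: perm_trans Hq.
  by rewrite -catA perm_cat2l perm_catC.
have Hlt : all (fun u => u < m.+1) q1.
  apply/allP => u Hu.
  have : u \in iota 1 m by rewrite -(perm_mem Hq12) mem_cat Hu.
  by rewrite mem_iota; lia.
have Hlt2 : all (fun u => u < m.+1) q2.
  apply/allP => u Hu.
  have : u \in iota 1 m by rewrite -(perm_mem Hq12) mem_cat Hu orbT.
  by rewrite mem_iota; lia.
exists (f q1 ++ rev q2).
  rewrite -[(q1 ++ _) ++ _]catA [(_ :: _) ++ _]cat_cons f_cat2 // go_cat_iota // catrevE.
  have -> : n - m = (n - m.+1).+1 by lia.
  by rewrite /= -!catA.
apply: perm_trans Hq12.
by rewrite perm_cat ?f_perm // perm_rev.
Qed.

Theorem lemma3p2 (n : nat) (p : seq nat) :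
  1 <= n -> is_perm n p -> t_stack_sortable n.-1 p.
Proof.
case: n => [|n] // _ Hp.
rewrite /t_stack_sortable (perm_size Hp) size_iota.
have main : forall j, j <= n -> exists2 q, iter j s12 p = q ++ iota (n.+1 - j).+1 (n.+1 - (n.+1 - j))
   & perm_eq q (iota 1 (n.+1 - j)).
  elim => [|j IH] Hj.
    by exists p; rewrite ?subn0 ?subnn ?cats0.
  have [q HE Hq] := IH (ltnW Hj).
  have E : n.+1 - j = (n.+1 - j.+1).+1 by lia.
  rewrite E in HE Hq.
  have [q' H1 H2] := step_inv (n := n.+1) (m := n.+1 - j.+1) (ltac:(lia)) HE Hq.
  exists q' => //.
  by rewrite iterS s12E H1.
have [q HE Hq] := main n (leqnn n).
rewrite /= HE.
have E : n.+1 - n = 1 by lia.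
rewrite E in Hq *.
have Hs := perm_size Hq.
case: q Hq Hs HE => [|a [|b q]] Hq //= _ _.
have : a \in [:: 1] by rewrite -(perm_mem Hq) mem_head.
rewrite inE => /eqP ->.
have -> : n.+1 - 1 = n by lia.
by [].
Qed.
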